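(* For each $C>0$ and $K>1$ there exists $D=D(K,C)>C$ with the following property. Let $\kappa$ be a $K$-contracting axis from $x$ to $x'$ and $\eta$ a $K$-contracting axis from $y'$ to $y$ in a geodesic metric space $X$. Suppose that $\operatorname{diam}(x'\cup\pi_\kappa(y'))<C$ and $\operatorname{diam}(y'\cup\pi_\eta(x))<C$. Then $\operatorname{diam}(x'\cup\pi_\kappa(\eta))<D$ and $\operatorname{diam}(y'\cup\pi_\eta(\kappa))<D$.
   Context: $X$ is a geodesic metric space. For $A\subseteq X$ and $z\in X$, $\pi_A(z)=\{a\in A:d(z,a)=d(z,A)\}$, and $\pi_A(B)=\bigcup_{b\in B}\pi_A(b)$. A set $A$ is $K$-contracting if $\pi_A(z)\ne\emptyset$ for all $z$ and for $x,y$ with $d(x,y)\le d(x,A)-K$ one has $\operatorname{diam}(\pi_A(x)\cup\pi_A(y))\le K$. A $K$-quasigeodesic is a map $\gamma$ from an interval of $\mathbb R$ or a set of consecutive integers to $X$ with $|s-t|/K-K\le d(\gamma(s),\gamma(t))\le K|s-t|+K$; a $K$-contracting axis is a $K$-quasigeodesic whose image is $K$-contracting, and ''from $a$ to $b$'' means its initial point is $a$ and terminal point is $b$. Projections onto a path mean projections onto its image. *)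

(* Defs.v *)
From Stdlib Require Import Reals ZArith.
Open Scope R_scope.

Section Metric.
Variable X : Type.
Variable d : X -> X -> R.

Definition is_metric : Prop :=
  (forall x y, 0 <= d x y) /\
  (forall x y, d x y = 0 <-> x = y) /\
  (forall x y, d x y = d y x) /\
  (forall x y z, d x z <= d x y + d y z).

Definition geodesic_space : Prop :=
  forall x y : X, exists g : R -> X,
    g 0 = x /\ g (d x y) = y /\
    forall s t, 0 <= s <= d x y -> 0 <= t <= d x y -> d (g s) (g t) = Rabs (s - t).

(* pi_A(z) = { a in A : d(z,a) = d(z,A) }, where d(z,A) = inf_{b in A} d(z,b);
   written out: a in A and d(z,a) <= d(z,b) for all b in A. *)
Definition proj (A : X -> Prop) (z : X) : X -> Prop :=
  fun a => A a /\ forall b, A b -> d z a <= d z b.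

Definition proj_set (A B : X -> Prop) : X -> Prop :=
  fun a => exists b, B b /\ proj A b a.

Definition union (A B : X -> Prop) : X -> Prop := fun p => A p \/ B p.
Definition single (x : X) : X -> Prop := fun p => p = x.

Definition diam_le (S : X -> Prop) (r : R) : Prop :=
  forall p q, S p -> S q -> d p q <= r.

(* diam S < r  (diam S = sup of distances, possibly +oo) *)
Definition diam_lt (S : X -> Prop) (r : R) : Prop :=
  exists B, B < r /\ diam_le S B.

(* A is K-contracting. The hypothesis d(x,y) <= d(x,A) - K, with
   d(x,A) = inf_{a in A} d(x,a), is written out as: for all a in A,
   d(x,y) <= d(x,a) - K. *)
Definition contracting (K : R) (A : X -> Prop) : Prop :=
  (forall z, exists a, proj A z a) /\
  (forall x y, (forall a, A a -> d x y <= d x a - K) ->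
     diam_le (union (proj A x) (proj A y)) K).

(* Domain of a path with an initial and terminal point: either the real
   interval [a,b] or the set of consecutive integers {m,...,n} (a = m, b = n). *)
Definition path_domain (I : R -> Prop) (a b : R) : Prop :=
  a <= b /\
  ((forall t, I t <-> a <= t <= b) \/
   (exists m n : Z, a = IZR m /\ b = IZR n /\
      forall t, I t <-> exists k : Z, t = IZR k /\ (m <= k <= n)%Z)).

Definition quasigeodesic (K : R) (I : R -> Prop) (gamma : R -> X) : Prop :=
  forall s t, I s -> I t ->
    Rabs (s - t) / K - K <= d (gamma s) (gamma t) /\
    d (gamma s) (gamma t) <= K * Rabs (s - t) + K.

Definition image (I : R -> Prop) (gamma : R -> X) : X -> Prop :=
  fun p => exists t, I t /\ gamma t = p.

Definition contracting_axis (K : R) (I : R -> Prop) (a b : R)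
    (gamma : R -> X) (p q : X) : Prop :=
  path_domain I a b /\ quasigeodesic K I gamma /\
  contracting K (image I gamma) /\ gamma a = p /\ gamma b = q.

End Metric.

(* Main.v *)
Require Import Defs.
From Stdlib Require Import Reals Lra Lia Classical ZArith.
Open Scope R_scope.

Lemma dpos {X} (d : X -> X -> R) (Hm : is_metric X d) x y : 0 <= d x y.
Proof. destruct Hm as [H _]; apply H. Qed.
Lemma drefl {X} (d : X -> X -> R) (Hm : is_metric X d) x : d x x = 0.
Proof. destruct Hm as [_ [H _]]; apply H; reflexivity. Qed.
Lemma dsym {X} (d : X -> X -> R) (Hm : is_metric X d) x y : d x y = d y x.
Proof. destruct Hm as [_ [_ [H _]]]; apply H. Qed.
Lemma dtri {X} (d : X -> X -> R) (Hm : is_metric X d) x y z : d x z <= d x y + d y z.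
Proof. destruct Hm as [_ [_ [_ H]]]; apply H. Qed.

Definition iso {X} (d : X -> X -> R) (g : R -> X) (s1 s2 : R) :=
  forall s t, s1 <= s <= s2 -> s1 <= t <= s2 -> d (g s) (g t) = Rabs (s - t).

Lemma iso_d {X} (d : X -> X -> R) g s1 s2 s t :
  iso d g s1 s2 -> s1 <= s <= s2 -> s1 <= t <= s2 -> s <= t -> d (g s) (g t) = t - s.
Proof. intros H H1 H2 H3. rewrite H by assumption. rewrite Rabs_left1 by lra. lra. Qed.

Lemma proj_self {X} (d : X -> X -> R) (Hm : is_metric X d) A a : A a -> proj X d A a a.
Proof. intro Ha. split; auto. intros b _. rewrite (drefl d Hm). apply (dpos d Hm). Qed.

Lemma proj_near {X} (d : X -> X -> R) (Hm : is_metric X d) A u a p s :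
  A a -> d u a <= s -> proj X d A u p -> d p a <= 2 * s.
Proof.
  intros Ha Hs [Hp Hmin]. pose proof (Hmin a Ha).
  pose proof (dtri d Hm p u a). rewrite (dsym d Hm p u) in H0. lra.
Qed.

Lemma L1 {X} (d : X -> X -> R) (Hm : is_metric X d) K A :
  0 < K -> contracting X d K A ->
  forall u v p q, proj X d A u p -> proj X d A v q -> d p q <= 3 * d u v + 2 * K.
Proof.
  intros HK [_ HC] u v p q Hp Hq.
  pose proof (dpos d Hm u v).
  destruct (Rle_dec (d u v) (d u p - K)) as [H1|H1].
  { assert (d p q <= K). { apply (HC u v).
      - intros a Ha. destruct Hp as [_ Hp]. pose proof (Hp a Ha). lra.
      - left; auto. - right; auto. }
    lra. }
  destruct (Rle_dec (d v u) (d v q - K)) as [H2|H2].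
  { assert (d p q <= K). { apply (HC v u).
      - intros a Ha. destruct Hq as [_ Hq]. pose proof (Hq a Ha). lra.
      - right; auto. - left; auto. }
    lra. }
  rewrite (dsym d Hm v u) in H2.
  pose proof (dtri d Hm p u q). pose proof (dtri d Hm u v q).
  rewrite (dsym d Hm p u) in H0. lra.
Qed.

Lemma ball2K {X} (d : X -> X -> R) (Hm : is_metric X d) K A :
  0 < K -> contracting X d K A ->
  forall v w p pw, proj X d A v p -> proj X d A w pw ->
  d v w <= Rmax (d v p - K) 0 -> d p pw <= 2 * K.
Proof.
  intros HK HA v w p pw Hp Hw Hd.
  destruct (Rle_dec K (d v p)) as [H|H].
  - rewrite Rmax_left in Hd by lra.
    destruct HA as [_ HC].
    assert (d p pw <= K). { apply (HC v w).
      - intros a Ha. destruct Hp as [_ Hp]. pose proof (Hp a Ha). lra.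
      - left; auto. - right; auto. }
    lra.
  - rewrite Rmax_right in Hd by lra. pose proof (dpos d Hm v w).
    assert (v = w). { destruct Hm as [_ [He _]]. apply He. lra. }
    subst w. pose proof (L1 d Hm K A HK HA v v p pw Hp Hw).
    rewrite (drefl d Hm) in H1. lra.
Qed.

Lemma slow_n {X} (d : X -> X -> R) (Hm : is_metric X d) K A :
  0 < K -> contracting X d K A ->
  forall g s1 s2, iso d g s1 s2 ->
  forall n : nat, forall s s', s1 <= s -> s <= s' -> s' <= s2 -> s' - s <= 2 * K * INR n ->
  (forall t, s < t <= s' -> forall a, A a -> 3 * K <= d (g t) a) ->
  forall a b, proj X d A (g s) a -> proj X d A (g s') b -> d a b <= (s' - s) / 2 + 2 * K.
Proof.
  intros HK HA g s1 s2 Hg n. induction n as [|n IH]; intros s s' H1 H2 H3 Hn Hf a b Ha Hb.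
  - simpl in Hn. assert (s = s') by lra. subst s'.
    pose proof (L1 d Hm K A HK HA _ _ _ _ Ha Hb). rewrite (drefl d Hm) in H. lra.
  - rewrite S_INR in Hn.
    destruct (Rle_dec (s' - s) (2 * K)) as [Hs|Hs].
    + destruct (Req_dec s s') as [E|E].
      * subst s'. pose proof (L1 d Hm K A HK HA _ _ _ _ Ha Hb). rewrite (drefl d Hm) in H. lra.
      * destruct HA as [HP HC].
        assert (d b a <= K). { apply (HC (g s') (g s)).
          - intros c Hc. rewrite (dsym d Hm (g s')). rewrite (iso_d d g s1 s2 s s') by (auto; lra).
            pose proof (Hf s' ltac:(lra) c Hc). lra.
          - left; auto. - right; auto. }
        rewrite (dsym d Hm) in H. lra.
    + set (m := s' - 2 * K).
      destruct HA as [HP HC] eqn:HAe.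
      destruct (HP (g m)) as [c Hc].
      assert (d c b <= K). { apply (HC (g s') (g m)).
          - intros e He. rewrite (dsym d Hm). rewrite (iso_d d g s1 s2 m s') by (unfold m; auto; lra).
            pose proof (Hf s' ltac:(lra) e He). unfold m. lra.
          - right; auto. - left; auto. }
      assert (d a c <= (m - s) / 2 + 2 * K).
      { apply (IH s m); auto; unfold m in *; try lra.
        intros t Ht. apply Hf. lra. }
      pose proof (dtri d Hm a c b). unfold m in H0. lra.
Qed.

Lemma slow {X} (d : X -> X -> R) (Hm : is_metric X d) K A :
  0 < K -> contracting X d K A ->
  forall g s1 s2, iso d g s1 s2 ->
  forall s s', s1 <= s -> s <= s' -> s' <= s2 ->
  (forall t, s < t <= s' -> forall a, A a -> 3 * K <= d (g t) a) ->
  forall a b, proj X d A (g s) a -> proj X d A (g s') b -> d a b <= (s' - s) / 2 + 2 * K.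
Proof.
  intros HK HA g s1 s2 Hg s s' H1 H2 H3 Hf.
  destruct (INR_archimed (2 * K) (s' - s) ltac:(lra)) as [n Hn].
  apply (slow_n d Hm K A HK HA g s1 s2 Hg n); auto; lra.
Qed.
Lemma END {X} (d : X -> X -> R) (Hm : is_metric X d) K A :
  0 < K -> contracting X d K A ->
  forall g s1 s2, iso d g s1 s2 ->
  forall s, s1 <= s -> s <= s2 ->
  (forall t, s < t <= s2 -> forall a, A a -> 3 * K <= d (g t) a) ->
  forall aw p, proj X d A (g s) aw -> proj X d A (g s2) p -> d aw p <= d (g s) aw + 9 * K.
Proof.
  intros HK HA g s1 s2 Hg s H1 H2 Hf aw p Haw Hp.
  set (beta := Rmax (d (g s2) p - K) 0).
  assert (Hb0 : 0 <= beta) by apply Rmax_r.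
  assert (Hb1 : d (g s2) p - K <= beta) by apply Rmax_l.
  pose proof (dpos d Hm (g s) aw).
  destruct (Rle_dec (s2 - s) beta) as [Hs|Hs].
  - assert (d p aw <= 2 * K).
    { apply (ball2K d Hm K A HK HA (g s2) (g s)); auto.
      rewrite (dsym d Hm). rewrite (iso_d d g s1 s2 s s2) by (auto; lra). exact Hs. }
    rewrite (dsym d Hm) in H0. lra.
  - set (s2' := s2 - beta).
    destruct HA as [HP HC] eqn:HAe.
    destruct (HP (g s2')) as [p1 Hp1].
    assert (d p p1 <= 2 * K).
    { apply (ball2K d Hm K A HK HA (g s2) (g s2')); auto.
      rewrite (dsym d Hm). rewrite (iso_d d g s1 s2 s2' s2) by (unfold s2'; auto; lra).
      unfold s2', beta. lra. }
    assert (d aw p1 <= (s2' - s) / 2 + 2 * K).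
    { apply (slow d Hm K A HK HA g s1 s2 Hg s s2'); auto; unfold s2'; try lra.
      intros t Ht. apply Hf. lra. }
    assert (Hd : s2 - s <= d (g s) aw + d aw p + d p (g s2)).
    { rewrite <- (iso_d d g s1 s2 s s2) by (auto; lra).
      pose proof (dtri d Hm (g s) aw (g s2)). pose proof (dtri d Hm aw p (g s2)). lra. }
    rewrite (dsym d Hm p) in Hd.
    pose proof (dtri d Hm aw p1 p) as T1. rewrite (dsym d Hm p1 p) in T1.
    unfold s2' in *. lra.
Qed.

Lemma G1 {X} (d : X -> X -> R) (Hm : is_metric X d) K A :
  0 < K -> contracting X d K A ->
  forall g s1 s2, iso d g s1 s2 -> s1 <= s2 ->
  forall q p, proj X d A (g s1) q -> proj X d A (g s2) p ->
  d q p <= 14 * K \/ exists t, s1 <= t <= s2 /\ d (g t) p <= 20 * K.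
Proof.
  intros HK HA g s1 s2 Hg H12 q p Hq Hp.
  set (E := fun t => s1 <= t <= s2 /\ exists a, A a /\ d (g t) a <= 3 * K).
  destruct (classic (exists t, E t)) as [Hne|Hem].
  - right.
    assert (Hbd : bound E). { exists s2. intros t [Ht _]. lra. }
    destruct (completeness E Hbd Hne) as [ts [Hub Hlub]].
    destruct Hne as [t0 Ht0].
    assert (Hts1 : s1 <= ts). { pose proof (Hub t0 Ht0). destruct Ht0 as [? _]. lra. }
    assert (Hts2 : ts <= s2). { apply Hlub. intros t [Ht _]. lra. }
    assert (Hex : exists t1, E t1 /\ ts - K < t1).
    { apply NNPP. intro Hn. assert (ts <= ts - K). { apply Hlub. intros t Et.
        destruct (Rle_dec t (ts - K)) as [h|h]; auto. exfalso. apply Hn. exists t. split; auto. lra. }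
      lra. }
    destruct Hex as [t1 [Et1 Ht1]].
    pose proof (Hub t1 Et1) as Ht1ts.
    destruct Et1 as [Ht1r [a1 [Ha1 Hda1]]].
    destruct HA as [HP HC] eqn:HAe.
    destruct (HP (g ts)) as [aw Haw].
    assert (Hrho : d (g ts) aw <= 4 * K).
    { destruct Haw as [_ Hmin]. pose proof (Hmin a1 Ha1).
      pose proof (dtri d Hm (g ts) (g t1) a1).
      rewrite (dsym d Hm (g ts) (g t1)) in H0. rewrite (iso_d d g s1 s2 t1 ts) in H0 by (auto; lra). lra. }
    assert (d aw p <= d (g ts) aw + 9 * K).
    { apply (END d Hm K A HK HA g s1 s2 Hg ts); auto.
      intros t Ht a Ha. destruct (Rle_dec (3 * K) (d (g t) a)) as [h|h]; auto.
      exfalso. assert (E t). { split. lra. exists a. split; auto. lra. }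
      pose proof (Hub t H). lra. }
    exists ts. split. lra. pose proof (dtri d Hm (g ts) aw p). lra.
  - left.
    assert (Hf : forall t, s1 <= t <= s2 -> forall a, A a -> 3 * K <= d (g t) a).
    { intros t Ht a Ha. destruct (Rle_dec (3 * K) (d (g t) a)) as [h|h]; auto.
      exfalso. apply Hem. exists t. split; auto. exists a. split; auto. lra. }
    set (alpha := Rmax (d (g s1) q - K) 0).
    set (beta := Rmax (d (g s2) p - K) 0).
    assert (Ha0 : 0 <= alpha) by apply Rmax_r.
    assert (Ha1 : d (g s1) q - K <= alpha) by apply Rmax_l.
    assert (Hb0 : 0 <= beta) by apply Rmax_r.
    assert (Hb1 : d (g s2) p - K <= beta) by apply Rmax_l.
    assert (HL : s2 - s1 <= d (g s1) q + d q p + d (g s2) p).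
    { rewrite <- (iso_d d g s1 s2 s1 s2) by (auto; lra).
      pose proof (dtri d Hm (g s1) q (g s2)). pose proof (dtri d Hm q p (g s2)).
      rewrite (dsym d Hm p (g s2)) in H0. lra. }
    destruct HA as [HP HC] eqn:HAe.
    destruct (Rle_dec (s1 + alpha) (s2 - beta)) as [Hab|Hab].
    + destruct (HP (g (s1 + alpha))) as [q1 Hq1].
      destruct (HP (g (s2 - beta))) as [p1 Hp1].
      assert (d q q1 <= 2 * K).
      { apply (ball2K d Hm K A HK HA (g s1) (g (s1 + alpha))); auto.
        rewrite (iso_d d g s1 s2 s1 (s1 + alpha)) by (auto; lra). unfold alpha, beta in *; lra. }
      assert (d p p1 <= 2 * K).
      { apply (ball2K d Hm K A HK HA (g s2) (g (s2 - beta))); auto.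
        rewrite (dsym d Hm).
        rewrite (iso_d d g s1 s2 (s2 - beta) s2) by (auto; lra). unfold alpha, beta in *; lra. }
      assert (d q1 p1 <= ((s2 - beta) - (s1 + alpha)) / 2 + 2 * K).
      { apply (slow d Hm K A HK HA g s1 s2 Hg); auto; try lra.
        intros t Ht. apply Hf. lra. }
      pose proof (dtri d Hm q q1 p). pose proof (dtri d Hm q1 p1 p).
      rewrite (dsym d Hm p1 p) in H3. lra.
    + set (tw := Rmin (s1 + alpha) s2).
      assert (Htw1 : s1 <= tw). { unfold tw. apply Rmin_glb; lra. }
      assert (Htw2 : tw <= s2) by apply Rmin_r.
      assert (Htw3 : tw <= s1 + alpha) by apply Rmin_l.
      assert (Htw4 : s2 - tw <= beta).
      { unfold tw. destruct (Rle_dec (s1 + alpha) s2).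
        - rewrite Rmin_left by lra. lra.
        - rewrite Rmin_right by lra. lra. }
      destruct (HP (g tw)) as [pw Hpw].
      assert (d q pw <= 2 * K).
      { apply (ball2K d Hm K A HK HA (g s1) (g tw)); auto.
        rewrite (iso_d d g s1 s2 s1 tw) by (auto; lra). unfold alpha, beta in *; lra. }
      assert (d p pw <= 2 * K).
      { apply (ball2K d Hm K A HK HA (g s2) (g tw)); auto.
        rewrite (dsym d Hm).
        rewrite (iso_d d g s1 s2 tw s2) by (auto; lra). unfold alpha, beta in *; lra. }
      pose proof (dtri d Hm q pw p). rewrite (dsym d Hm pw p) in H1. lra.
Qed.

Lemma iso_sub {X} (d : X -> X -> R) g s1 s2 a b :
  iso d g s1 s2 -> s1 <= a -> b <= s2 -> iso d g a b.
Proof. intros H Ha Hb s t Hs Ht. apply H; lra. Qed.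

Lemma iso_rev {X} (d : X -> X -> R) g s1 s2 :
  iso d g s1 s2 -> iso d (fun s => g (- s)) (- s2) (- s1).
Proof. intros H s t Hs Ht. cbv beta. rewrite H by lra. replace (- s - - t) with (- (s - t)) by ring. apply Rabs_Ropp. Qed.

Lemma G1r {X} (d : X -> X -> R) (Hm : is_metric X d) K A :
  0 < K -> contracting X d K A ->
  forall g s1 s2, iso d g s1 s2 -> s1 <= s2 ->
  forall q p, proj X d A (g s1) q -> proj X d A (g s2) p ->
  d q p <= 14 * K \/ exists t, s1 <= t <= s2 /\ d (g t) q <= 20 * K.
Proof.
  intros HK HA g s1 s2 Hg H12 q p Hq Hp.
  destruct (G1 d Hm K A HK HA (fun s => g (- s)) (- s2) (- s1) (iso_rev d g s1 s2 Hg)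
     ltac:(lra) p q) as [H|[t [Ht H]]].
  - rewrite Ropp_involutive; auto.
  - rewrite Ropp_involutive; auto.
  - left. rewrite (dsym d Hm). auto.
  - right. exists (- t). split. lra. auto.
Qed.

Lemma Morse {X} (d : X -> X -> R) (Hm : is_metric X d) K A :
  0 < K -> contracting X d K A ->
  forall g s1 s2, iso d g s1 s2 -> s1 <= s2 -> A (g s1) -> A (g s2) ->
  forall t, s1 <= t <= s2 -> exists a, A a /\ d (g t) a <= 60 * K.
Proof.
  intros HK HA g s1 s2 Hg H12 HA1 HA2 t Ht.
  destruct HA as [HP HC] eqn:HAe.
  destruct (HP (g t)) as [pm Hpm].
  assert (Hpa : A pm) by (destruct Hpm; auto).
  destruct (G1 d Hm K A HK HA g s1 t (iso_sub d g s1 s2 s1 t Hg ltac:(lra) ltac:(lra))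
     ltac:(lra) (g s1) pm (proj_self d Hm A _ HA1) Hpm) as [h1|[t1 [Ht1 h1]]];
  destruct (G1r d Hm K A HK HA g t s2 (iso_sub d g s1 s2 t s2 Hg ltac:(lra) ltac:(lra))
     ltac:(lra) pm (g s2) Hpm (proj_self d Hm A _ HA2)) as [h2|[t2 [Ht2 h2]]].
  - exists (g s1). split; auto.
    pose proof (dtri d Hm (g s1) pm (g s2)).
    rewrite (iso_d d g s1 s2 s1 s2) in H by (auto; lra).
    rewrite (dsym d Hm). rewrite (iso_d d g s1 s2 s1 t) by (auto; lra). lra.
  - exists (g s1). split; auto.
    pose proof (dtri d Hm (g s1) pm (g t2)).
    rewrite (iso_d d g s1 s2 s1 t2) in H by (auto; lra). rewrite (dsym d Hm pm) in H.
    rewrite (dsym d Hm). rewrite (iso_d d g s1 s2 s1 t) by (auto; lra). lra.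
  - exists (g s2). split; auto.
    pose proof (dtri d Hm (g t1) pm (g s2)).
    rewrite (iso_d d g s1 s2 t1 s2) in H by (auto; lra).
    rewrite (iso_d d g s1 s2 t s2) by (auto; lra). lra.
  - exists pm. split; auto.
    pose proof (dtri d Hm (g t1) pm (g t2)).
    rewrite (iso_d d g s1 s2 t1 t2) in H by (auto; lra). rewrite (dsym d Hm pm) in H.
    pose proof (dtri d Hm (g t) (g t1) pm).
    rewrite (dsym d Hm (g t) (g t1)) in H0. rewrite (iso_d d g s1 s2 t1 t) in H0 by (auto; lra).
    lra.
Qed.

Lemma qg_low {X} (d : X -> X -> R) K I (k : R -> X) :
  0 < K -> quasigeodesic X d K I k -> forall s s' r, I s -> I s' -> d (k s) (k s') <= r ->
  Rabs (s - s') <= K * (r + K).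
Proof.
  intros HK Hq s s' r Hs Hs' Hr. destruct (Hq s s' Hs Hs') as [H1 _].
  assert (Rabs (s - s') / K <= r + K) by lra.
  replace (Rabs (s - s')) with (K * (Rabs (s - s') / K)) by (field; lra).
  apply Rmult_le_compat_l; lra.
Qed.

Lemma qg_up {X} (d : X -> X -> R) K I (k : R -> X) :
  0 < K -> quasigeodesic X d K I k -> forall s s' J, I s -> I s' -> Rabs (s - s') <= J ->
  d (k s) (k s') <= K * J + K.
Proof.
  intros HK Hq s s' J Hs Hs' HJ. destruct (Hq s s' Hs Hs') as [_ H2].
  pose proof (Rmult_le_compat_l K _ _ (Rlt_le _ _ HK) HJ). lra.
Qed.

Lemma BT {X} (d : X -> X -> R) (Hm : is_metric X d) K I (k : R -> X) E :
  0 < K -> quasigeodesic X d K I k -> 0 <= E ->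
  forall sg s1 s2 tau ak bk t, iso d sg s1 s2 -> s1 <= tau <= s2 ->
  (forall u, s1 <= u <= s2 -> exists s, I s /\ d (sg u) (k s) <= E) ->
  I ak -> I bk -> I t -> ak <= t <= bk ->
  sg s1 = k ak -> sg s2 = k t -> d (sg tau) (k bk) <= E ->
  d (k bk) (k t) <= 2 * E + K * (K * (2 * E + 1 + K)) + K.
Proof.
  intros HK Hq HE sg s1 s2 tau ak bk t Hg Htau Hnear Hak Hbk Ht Hakt H1 H2 Htb.
  set (J := K * (2 * E + 1 + K)).
  assert (HJ0 : 0 <= J) by (unfold J; apply Rmult_le_pos; lra).
  set (Phi := fun u => exists s, I s /\ s <= t /\ d (sg u) (k s) <= E).
  set (Psi := fun u => exists s, I s /\ Rabs (s - t) <= J /\ d (sg u) (k s) <= E).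
  set (tn := fun n : nat => Rmin (s1 + INR n) tau).
  assert (Htn : forall n, s1 <= tn n <= tau /\ tn n <= tn (S n) /\ tn (S n) - tn n <= 1).
  { intro n. unfold tn. rewrite S_INR. pose proof (pos_INR n).
    destruct (Rle_dec (s1 + INR n) tau); destruct (Rle_dec (s1 + (INR n + 1)) tau).
    - rewrite !Rmin_left by lra. lra.
    - rewrite Rmin_left by lra. rewrite Rmin_right by lra. lra.
    - lra.
    - rewrite !Rmin_right by lra. lra. }
  assert (Hind : forall n, (exists u, s1 <= u <= tau /\ Psi u) \/ Phi (tn n)).
  { induction n as [|n IH].
    - right. unfold tn. simpl. rewrite Rplus_0_r. rewrite Rmin_left by lra.
      exists ak. split; auto. split. lra. rewrite H1, (drefl d Hm). lra.
    - destruct IH as [IH|[sn [Isn [Hsn Hdn]]]]; [left; auto|].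
      destruct (Htn n) as [[Ha Hb] [Hc He]].
      destruct (Htn (S n)) as [[Ha' Hb'] _].
      destruct (Hnear (tn (S n)) ltac:(lra)) as [s' [Is' Hd']].
      destruct (Rle_dec s' t) as [Hst|Hst].
      + right. exists s'. auto.
      + apply Rnot_le_lt in Hst. left. exists (tn n). split. lra. exists sn. split; auto. split; auto.
        assert (Hdd : d (k sn) (k s') <= 2 * E + 1).
        { pose proof (dtri d Hm (k sn) (sg (tn n)) (k s')).
          pose proof (dtri d Hm (sg (tn n)) (sg (tn (S n))) (k s')).
          rewrite (iso_d d sg s1 s2 (tn n) (tn (S n))) in H0 by (auto; lra).
          rewrite (dsym d Hm (k sn) (sg (tn n))) in H. lra. }
        pose proof (qg_low d K I k HK Hq sn s' _ Isn Is' Hdd).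
        fold J in H. rewrite Rabs_left1 in H by lra. rewrite Rabs_left1 by lra. lra. }
  destruct (INR_archimed 1 (tau - s1) ltac:(lra)) as [N HN].
  assert (HtN : tn N = tau). { unfold tn. rewrite Rmin_right; lra. }
  assert (Hfin : exists u, s1 <= u <= tau /\ Psi u).
  { destruct (Hind N) as [H|[s [Is [Hs Hd]]]]; auto.
    rewrite HtN in Hd. exists tau. split. lra. exists s. split; auto. split; auto.
    assert (Hdd : d (k s) (k bk) <= 2 * E + 1).
    { pose proof (dtri d Hm (k s) (sg tau) (k bk)). rewrite (dsym d Hm (k s) (sg tau)) in H. lra. }
    pose proof (qg_low d K I k HK Hq s bk _ Is Hbk Hdd). fold J in H.
    rewrite Rabs_left1 in H by lra. rewrite Rabs_left1 by lra. lra. }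
  destruct Hfin as [u [Hu [s [Is [Hst Hd]]]]].
  pose proof (qg_up d K I k HK Hq s t J Is Ht Hst).
  assert (d (sg u) (k t) <= E + K * J + K).
  { pose proof (dtri d Hm (sg u) (k s) (k t)). lra. }
  rewrite <- H2 in H0 |- *.
  rewrite (iso_d d sg s1 s2 u s2) in H0 by (auto; lra).
  pose proof (dtri d Hm (k bk) (sg tau) (sg s2)).
  rewrite (iso_d d sg s1 s2 tau s2) in H3 by (auto; lra).
  rewrite (dsym d Hm (k bk) (sg tau)) in H3. fold J. lra.
Qed.

Lemma pd_facts I a b : path_domain I a b -> I a /\ I b /\ forall t, I t -> a <= t <= b.
Proof.
  intros [Hab [H|[m [n [Hm [Hn H]]]]]].
  - split; [apply H; lra|]. split; [apply H; lra|]. intros t0 Ht. apply H in Ht. lra.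
  - assert (Hmn : (m <= n)%Z). { apply le_IZR. lra. }
    split; [apply H; exists m; split; [auto|lia]|].
    split; [apply H; exists n; split; [auto|lia]|].
    intros t0 Ht. apply H in Ht. destruct Ht as [k [Hk1 Hk]]. subst. split; apply IZR_le; lia.
Qed.

Lemma geo {X} (d : X -> X -> R) (Hm : is_metric X d) :
  geodesic_space X d -> forall u v, exists g, iso d g 0 (d u v) /\ g 0 = u /\ g (d u v) = v.
Proof.
  intros H u v. destruct (H u v) as [g [H1 [H2 H3]]]. exists g.
  split; [intros s t Hs Ht; apply H3; auto | auto].
Qed.

Definition EE (K C : R) := 400 * K + 4 * C.
Definition D1 (K C : R) := 2 * EE K C + K * (K * (2 * EE K C + 1 + K)) + K.
Definition D2 (K C : R) := D1 K C + 480 * K + 4 * C.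

Lemma D1_ge K C : 0 < K -> 0 <= C -> 800 * K + 8 * C + K <= D1 K C.
Proof.
  intros HK HC. unfold D1, EE.
  assert (0 <= K * (K * (2 * (400 * K + 4 * C) + 1 + K))).
  { apply Rmult_le_pos; try lra. apply Rmult_le_pos; lra. }
  lra.
Qed.

Lemma goal1 {X} (d : X -> X -> R) (Hm : is_metric X d) (Hgeo : geodesic_space X d)
  K C (Ik : R -> Prop) (kappa : R -> X) ak bk (B : X -> Prop) x x' y' :
  0 < K -> 0 <= C ->
  contracting X d K (image X Ik kappa) -> contracting X d K B ->
  quasigeodesic X d K Ik kappa ->
  Ik ak -> Ik bk -> (forall t, Ik t -> ak <= t <= bk) ->
  kappa ak = x -> kappa bk = x' -> B y' ->
  (forall q', proj X d (image X Ik kappa) y' q' -> d x' q' <= C) ->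
  (forall z, proj X d B x z -> d y' z <= C) ->
  forall b p, B b -> proj X d (image X Ik kappa) b p -> d p x' <= D1 K C.
Proof.
  intros HK HC HA HB Hq Hak Hbk Hdom Hx Hx' Hy' Hc1 Hc2 b p Hb Hp.
  set (A := image X Ik kappa) in *.
  pose proof (D1_ge K C HK HC) as HD1.
  assert (HAp : A p) by (destruct Hp; auto).
  assert (HAx : A x) by (exists ak; auto).
  destruct HA as [PA CA] eqn:HAe. destruct HB as [PB CB] eqn:HBe.
  destruct (PA y') as [q' Hq']. pose proof (Hc1 q' Hq') as Hxq.
  destruct (geo d Hm Hgeo y' b) as [g [Hg [Hg0 Hg1]]].
  pose proof (dpos d Hm y' b).
  destruct (G1 d Hm K A HK HA g 0 (d y' b) Hg H q' p ltac:(rewrite Hg0; auto) ltac:(rewrite Hg1; auto))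
    as [Ha|[tau [Htau Hgt]]].
  { pose proof (dtri d Hm p q' x'). rewrite (dsym d Hm p q'), (dsym d Hm q' x') in H0. lra. }
  destruct (Morse d Hm K B HK HB g 0 (d y' b) Hg H ltac:(rewrite Hg0; auto) ltac:(rewrite Hg1; auto) tau Htau)
    as [b1 [Hb1 Hgb1]].
  assert (Hpb1 : d p b1 <= 80 * K).
  { pose proof (dtri d Hm p (g tau) b1). rewrite (dsym d Hm p (g tau)) in H0. lra. }
  destruct (PB x) as [z Hz]. pose proof (Hc2 z Hz) as Hyz.
  destruct (PB p) as [qp Hqp].
  pose proof (proj_near d Hm B p b1 qp (80 * K) Hb1 Hpb1 Hqp) as Hqpb1.
  destruct (geo d Hm Hgeo x p) as [sg [Hs [Hs0 Hs1]]].
  pose proof (dpos d Hm x p) as Hxp.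
  destruct (G1r d Hm K B HK HB sg 0 (d x p) Hs Hxp z qp ltac:(rewrite Hs0; auto) ltac:(rewrite Hs1; auto))
    as [Hzq|[tau' [Htau' Hst]]].
  { assert (Hyp : d y' p <= C + 254 * K).
    { pose proof (dtri d Hm y' z qp). pose proof (dtri d Hm y' qp b1). pose proof (dtri d Hm y' b1 p).
      rewrite (dsym d Hm b1 p) in H2. lra. }
    pose proof (L1 d Hm K A HK HA y' p q' p Hq' (proj_self d Hm A p HAp)).
    pose proof (dtri d Hm p q' x'). rewrite (dsym d Hm p q'), (dsym d Hm q' x') in H1. lra. }
  destruct (Morse d Hm K A HK HA sg 0 (d x p) Hs Hxp ltac:(rewrite Hs0; auto) ltac:(rewrite Hs1; auto) tau' Htau')
    as [a [Ha Hsa]].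
  assert (Hya : d y' a <= 80 * K + C).
  { pose proof (dtri d Hm y' (sg tau') a). pose proof (dtri d Hm y' z (sg tau')).
    rewrite (dsym d Hm z (sg tau')) in H1. lra. }
  pose proof (proj_near d Hm A y' a q' _ Ha Hya Hq') as Hqa.
  assert (HsE : d (sg tau') (kappa bk) <= EE K C).
  { rewrite Hx'. unfold EE. pose proof (dtri d Hm (sg tau') a q'). pose proof (dtri d Hm (sg tau') q' x').
    rewrite (dsym d Hm q' x') in H1. rewrite (dsym d Hm q' a) in Hqa. lra. }
  destruct HAp as [tp [Htp Htp']].
  assert (HBT := BT d Hm K Ik kappa (EE K C) HK Hq ltac:(unfold EE; lra) sg 0 (d x p) tau' ak bk tp
    Hs Htau').
  assert (d (kappa bk) (kappa tp) <= D1 K C).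
  { unfold D1. apply HBT; auto; try (apply Hdom in Htp; lra).
    - intros u Hu. destruct (Morse d Hm K A HK HA sg 0 (d x p) Hs Hxp ltac:(rewrite Hs0; auto)
        ltac:(rewrite Hs1; exists tp; auto) u Hu) as [a' [[s' [Hs' Hs'']] Hd']].
      exists s'. split; auto. rewrite Hs''. unfold EE. lra.
    - congruence.
    - congruence. }
  rewrite Hx', Htp' in H0. rewrite (dsym d Hm). auto.
Qed.

Lemma goal2 {X} (d : X -> X -> R) (Hm : is_metric X d) (Hgeo : geodesic_space X d)
  K C (Ik : R -> Prop) (kappa : R -> X) ak bk (B : X -> Prop) x x' y' :
  0 < K -> 0 <= C ->
  contracting X d K (image X Ik kappa) -> contracting X d K B ->
  quasigeodesic X d K Ik kappa ->
  Ik ak -> Ik bk -> (forall t, Ik t -> ak <= t <= bk) ->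
  kappa ak = x -> kappa bk = x' -> B y' ->
  (forall q', proj X d (image X Ik kappa) y' q' -> d x' q' <= C) ->
  (forall z, proj X d B x z -> d y' z <= C) ->
  forall a q, image X Ik kappa a -> proj X d B a q -> d q y' <= D2 K C.
Proof.
  intros HK HC HA HB Hq Hak Hbk Hdom Hx Hx' Hy' Hc1 Hc2 a q Ha Hqa.
  pose proof (goal1 d Hm Hgeo K C Ik kappa ak bk B x x' y' HK HC HA HB Hq Hak Hbk Hdom Hx Hx' Hy' Hc1 Hc2) as G.
  set (A := image X Ik kappa) in *.
  pose proof (D1_ge K C HK HC) as HD1. unfold D2.
  assert (HAx : A x) by (exists ak; auto).
  assert (HBq : B q) by (destruct Hqa; auto).
  destruct HA as [PA CA] eqn:HAe. destruct HB as [PB CB] eqn:HBe.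
  destruct (PA y') as [q' Hq']. pose proof (Hc1 q' Hq') as Hxq.
  destruct (PB x) as [z Hz]. pose proof (Hc2 z Hz) as Hyz.
  destruct (geo d Hm Hgeo x a) as [g [Hg [Hg0 Hg1]]].
  pose proof (dpos d Hm x a).
  destruct (G1 d Hm K B HK HB g 0 (d x a) Hg H z q ltac:(rewrite Hg0; auto) ltac:(rewrite Hg1; auto))
    as [H1|[tau [Htau Hgt]]].
  { pose proof (dtri d Hm q z y'). rewrite (dsym d Hm q z), (dsym d Hm z y') in H0. lra. }
  destruct (Morse d Hm K A HK HA g 0 (d x a) Hg H ltac:(rewrite Hg0; auto) ltac:(rewrite Hg1; auto) tau Htau)
    as [a1 [Ha1 Hga1]].
  assert (Hqa1 : d q a1 <= 80 * K).
  { pose proof (dtri d Hm q (g tau) a1). rewrite (dsym d Hm q (g tau)) in H0. lra. }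
  destruct (PA q) as [pq Hpq].
  pose proof (G q pq HBq Hpq) as Hpqx.
  pose proof (proj_near d Hm A q a1 pq _ Ha1 Hqa1 Hpq) as Hpqa1.
  assert (Hqx : d q x' <= 240 * K + D1 K C).
  { pose proof (dtri d Hm q a1 x'). pose proof (dtri d Hm a1 pq x').
    rewrite (dsym d Hm a1 pq) in H1. lra. }
  destruct (PB a1) as [qa1 Hqa1'].
  rewrite (dsym d Hm q a1) in Hqa1.
  pose proof (proj_near d Hm B a1 q qa1 _ HBq Hqa1 Hqa1') as Hqq.
  destruct (geo d Hm Hgeo x a1) as [sg [Hs [Hs0 Hs1]]].
  pose proof (dpos d Hm x a1) as Hxa.
  destruct (G1r d Hm K B HK HB sg 0 (d x a1) Hs Hxa z qa1 ltac:(rewrite Hs0; auto) ltac:(rewrite Hs1; auto))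
    as [Hzq|[tau' [Htau' Hst]]].
  { pose proof (dtri d Hm q qa1 y') as T1. pose proof (dtri d Hm qa1 z y') as T2.
    rewrite (dsym d Hm q qa1) in T1. rewrite (dsym d Hm qa1 z), (dsym d Hm z y') in T2. lra. }
  destruct (Morse d Hm K A HK HA sg 0 (d x a1) Hs Hxa ltac:(rewrite Hs0; auto) ltac:(rewrite Hs1; auto) tau' Htau')
    as [a2 [Ha2 Hsa]].
  assert (Hya : d y' a2 <= 80 * K + C).
  { pose proof (dtri d Hm y' (sg tau') a2). pose proof (dtri d Hm y' z (sg tau')).
    rewrite (dsym d Hm z (sg tau')) in H1. lra. }
  pose proof (proj_near d Hm A y' a2 q' _ Ha2 Hya Hq') as Hqa2.
  pose proof (dtri d Hm q x' y') as T1. pose proof (dtri d Hm x' q' y') as T2.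
  pose proof (dtri d Hm q' a2 y') as T3.
  rewrite (dsym d Hm a2 y') in T3. lra.
Qed.

Theorem lemma3p3 :
  forall C K : R, 0 < C -> 1 < K ->
  exists D : R, C < D /\
  forall (X : Type) (d : X -> X -> R),
    is_metric X d -> geodesic_space X d ->
    forall (Ik : R -> Prop) (ak bk : R) (kappa : R -> X)
           (Ie : R -> Prop) (ae be : R) (eta : R -> X)
           (x x' y y' : X),
      contracting_axis X d K Ik ak bk kappa x x' ->
      contracting_axis X d K Ie ae be eta y' y ->
      diam_lt X d (union X (single X x') (proj X d (image X Ik kappa) y')) C ->
      diam_lt X d (union X (single X y') (proj X d (image X Ie eta) x)) C ->
      diam_lt X d (union X (single X x')
                     (proj_set X d (image X Ik kappa) (image X Ie eta))) D /\
      diam_lt X d (union X (single X y')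
                     (proj_set X d (image X Ie eta) (image X Ik kappa))) D.
Proof.
  intros C K HC HK.
  assert (HK0 : 0 < K) by lra.
  pose proof (D1_ge K C HK0 ltac:(lra)) as HD1.
  exists (2 * D2 K C + C + 1). unfold D2 in *. split. lra.
  intros X d Hm Hgeo Ik ak bk kappa Ie ae be eta x x' y y'
    [Hpk [Hqk [HAk [Hk0 Hk1]]]] [Hpe [Hqe [HBe [He0 He1]]]] [B1 [HB1 Hd1]] [B2 [HB2 Hd2]].
  destruct (pd_facts _ _ _ Hpk) as [Hak [Hbk Hdom]].
  destruct (pd_facts _ _ _ Hpe) as [Hae [Hbe Hdome]].
  assert (Hy' : image X Ie eta y') by (exists ae; auto).
  assert (Hc1 : forall q', proj X d (image X Ik kappa) y' q' -> d x' q' <= C).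
  { intros q' Hq'. assert (d x' q' <= B1). { apply Hd1. left; reflexivity. right; auto. } lra. }
  assert (Hc2 : forall z, proj X d (image X Ie eta) x z -> d y' z <= C).
  { intros z Hz. assert (d y' z <= B2). { apply Hd2. left; reflexivity. right; auto. } lra. }
  pose proof (goal1 d Hm Hgeo K C Ik kappa ak bk _ x x' y' HK0 ltac:(lra) HAk HBe Hqk Hak Hbk Hdom Hk0 Hk1 Hy' Hc1 Hc2) as G1'.
  pose proof (goal2 d Hm Hgeo K C Ik kappa ak bk _ x x' y' HK0 ltac:(lra) HAk HBe Hqk Hak Hbk Hdom Hk0 Hk1 Hy' Hc1 Hc2) as G2'.
  unfold D2 in G2'.
  split.
  - exists (2 * (D1 K C + 480 * K + 4 * C)). split. lra.
    intros u v Hu Hv.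
    assert (Hux : d u x' <= D1 K C).
    { destruct Hu as [Hu|[b [Hb Hp]]]. - rewrite Hu, (drefl d Hm). lra.
      - apply (G1' b); auto. }
    assert (Hvx : d v x' <= D1 K C).
    { destruct Hv as [Hv|[b [Hb Hp]]]. - rewrite Hv, (drefl d Hm). lra.
      - apply (G1' b); auto. }
    pose proof (dtri d Hm u x' v). rewrite (dsym d Hm x' v) in H. lra.
  - exists (2 * (D1 K C + 480 * K + 4 * C)). split. lra.
    intros u v Hu Hv.
    assert (Hux : d u y' <= D1 K C + 480 * K + 4 * C).
    { destruct Hu as [Hu|[a [Ha Hp]]]. - rewrite Hu, (drefl d Hm). lra.
      - apply (G2' a); auto. }
    assert (Hvx : d v y' <= D1 K C + 480 * K + 4 * C).
    { destruct Hv as [Hv|[a [Ha Hp]]]. - rewrite Hv, (drefl d Hm). lra.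
      - apply (G2' a); auto. }
    pose proof (dtri d Hm u y' v). rewrite (dsym d Hm y' v) in H. lra.
Qed.
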